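(* Let $T$ be a tree with exactly four pendant vertices $u_1,u_2,u_3,u_4$ and exactly two major vertices $m_1\ne m_2$, such that $T$ is the union of the paths $P_{u_1,m_1}$, $P_{u_2,m_1}$, $P_{m_1,m_2}$, $P_{u_3,m_2}$, $P_{u_4,m_2}$, where $P_{u_1,m_1}$ and $P_{u_2,m_1}$ are glued to $P_{m_1,m_2}$ at $m_1$, and $P_{u_3,m_2}$ and $P_{u_4,m_2}$ are glued at $m_2$ (these five paths being otherwise disjoint). If $m(T,1)\ge 2$, then $d(u_1,m_1)\equiv d(u_2,m_1)\equiv 1\pmod 3$ or $d(u_3,m_2)\equiv d(u_4,m_2)\equiv 1\pmod 3$.
   Context: $m(T,\lambda)$ denotes the multiplicity of $\lambda$ as an eigenvalue of the Laplacian matrix $L(T)=D(T)-A(T)$. A pendant vertex has degree $1$; a major vertex has degree at least $3$. $P_{r,s}$ is the path from $r$ to $s$; $d$ denotes distance. *)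

(* Defs.v *)
From mathcomp Require Import all_boot all_order all_algebra.
Set Implicit Arguments. Unset Strict Implicit. Unset Printing Implicit Defensive.
Import GRing.Theory Num.Theory.

Definition simple_graph (n : nat) (e : rel 'I_n) : Prop :=
  symmetric e /\ irreflexive e.

(* Tree: connected simple graph with n - 1 edges (each edge counted twice
   in the set of ordered adjacent pairs). *)
Definition is_tree (n : nat) (e : rel 'I_n) : Prop :=
  [/\ simple_graph e, (forall x y, connect e x y)
    & #|[set p : 'I_n * 'I_n | e p.1 p.2]| = (2 * n.-1)%N].

Definition degree (n : nat) (e : rel 'I_n) (x : 'I_n) : nat :=
  #|[set y | e x y]|.

Definition pendant (n : nat) (e : rel 'I_n) (x : 'I_n) : bool :=
  degree e x == 1%N.
Definition major (n : nat) (e : rel 'I_n) (x : 'I_n) : bool :=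
  (3 <= degree e x)%N.

Fixpoint reach (n : nat) (e : rel 'I_n) (k : nat) (x y : 'I_n) : bool :=
  match k with
  | 0 => x == y
  | k'.+1 => reach e k' x y || [exists z, e x z && reach e k' z y]
  end.

(* Graph distance (correct for connected graphs, where it is < n). *)
Definition dist (n : nat) (e : rel 'I_n) (x y : 'I_n) : nat :=
  find (fun k => reach e k x y) (iota 0 n).

(* Vertex set of the (unique) path P_{r,s} in a tree. *)
Definition path_set (n : nat) (e : rel 'I_n) (r s : 'I_n) : {set 'I_n} :=
  [set x | (dist e r x + dist e x s == dist e r s)%N].

Definition laplacian (n : nat) (e : rel 'I_n) : 'M[rat]_n :=
  \matrix_(i, j) (if i == j then ((degree e i)%:R)%R
                  else if e i j then (-1)%R else 0%R).

(* m(T, lambda): multiplicity of lambda as an eigenvalue of L(T)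
   (as a root of the characteristic polynomial; L is symmetric, so this
   equals the geometric multiplicity). *)
Definition eig_mult (n : nat) (e : rel 'I_n) (lam : rat) : nat :=
  mup lam (char_poly (laplacian e)).

(* Main.v *)
Require Import Defs.
From mathcomp Require Import all_boot all_order all_algebra.
From mathcomp Require Import all_field spectral sesquilinear.
From mathcomp Require Import zify ring.
Set Implicit Arguments. Unset Strict Implicit. Unset Printing Implicit Defensive.
Import GRing.Theory Num.Theory.

Definition s6 (F : fieldType) (k : nat) : F :=
  match (k %% 6)%N with 0 => 1 | 1 => 0 | 2 => -1 | 3 => -1 | 4 => 0 | _ => 1 end%R.

Lemma s6_0 (F : fieldType) : s6 F 0 = 1%R. Proof. by []. Qed.
Lemma s6_1 (F : fieldType) : s6 F 1 = 0%R. Proof. by []. Qed.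

Lemma s6_rec (F : fieldType) j : s6 F j.+2 = (s6 F j.+1 - s6 F j)%R.
Proof.
rewrite /s6 -(addn2 j) -(addn1 j) -modnDml -(modnDml j 1).
case: (j %% 6)%N (ltn_pmod j (isT : (0 < 6)%N)) => [|[|[|[|[|[|r]]]]]] //= _;
  idtac. all: ring.
Qed.

Lemma s6_eq0 (F : fieldType) k : (s6 F k == 0%R) = (k %% 3 == 1)%N.
Proof.
rewrite /s6 -(modn_dvdm k (isT : (3 %| 6)%N)).
case: (k %% 6)%N (ltn_pmod k (isT : (0 < 6)%N)) => [|[|[|[|[|[|r]]]]]] //= _;
  by rewrite ?oppr_eq0 ?oner_eq0 ?eqxx.
Qed.

Lemma s6_pair (F : fieldType) j : s6 F j.+1 = 0%R -> s6 F j != 0%R.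
Proof.
move/eqP; rewrite !s6_eq0 => h; apply/negP => h2.
move: h h2; rewrite -addn1 -modnDml; case: (j %% 3)%N (ltn_pmod j (isT : (0 < 3)%N)) => [|[|[|r]]] //.
Qed.

Section Tree.
Variables (n : nat) (e : rel 'I_n).
Hypothesis esymm : symmetric e.
Hypothesis eirr : irreflexive e.
Hypothesis econn : forall x y, connect e x y.

Lemma reachS k x y : reach e k x y -> reach e k.+1 x y.
Proof. by rewrite /= => ->. Qed.

Lemma reach_le k k' x y : (k <= k')%N -> reach e k x y -> reach e k' x y.
Proof.
move=> /subnK <-; elim: (k' - k)%N => [//|d IH] h.
by rewrite addSn; apply: reachS; apply: IH.
Qed.

Lemma reach_trans k1 k2 x y z :
  reach e k1 x y -> reach e k2 y z -> reach e (k1 + k2) x z.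
Proof.
elim: k1 x => [|k1 IH] x /=.
  by move/eqP => ->.
case/orP => [h1 h2|/existsP [w /andP [exw h1]] h2].
  by apply: reachS; apply: IH.
rewrite /=; apply/orP; right; apply/existsP; exists w.
by rewrite exw; apply: IH.
Qed.

Lemma reach_edge x y : e x y -> reach e 1 x y.
Proof. by move=> h /=; apply/orP; right; apply/existsP; exists y; rewrite h /=. Qed.

Lemma reach_sym k x y : reach e k x y -> reach e k y x.
Proof.
elim: k x y => [|k IH] x y.
  by rewrite /= eq_sym.
case/orP => [h|/existsP [w /andP [exw h]]].
  by apply: reachS; apply: IH.
rewrite -addn1; apply: reach_trans (IH _ _ h) _.
by apply: reach_edge; rewrite esymm.
Qed.

Lemma reach_path x p : path e x p -> reach e (size p) x (last x p).
Proof.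
elim: p x => [|y p IH] x /=; first by rewrite eqxx.
case/andP => exy hp; apply/orP; right; apply/existsP; exists y.
by rewrite exy; apply: IH.
Qed.

Lemma reach_small x y : exists2 k, (k < n)%N & reach e k x y.
Proof.
have /connectP [p hp ->] := econn x y.
case/shortenP: hp => p' hp' hu _.
exists (size p'); last by apply: reach_path.
have := card_uniqP hu; move: (max_card (mem (x :: p'))); rewrite card_ord /=.
by move=> h1 h2; rewrite h2 /= in h1.
Qed.

Lemma dist_spec x y : reach e (dist e x y) x y /\ (dist e x y < n)%N.
Proof.
have [k kn hk] := reach_small x y.
have hh : has (fun k => reach e k x y) (iota 0 n).
  by apply/hasP; exists k => //; rewrite mem_iota.
have lt := hh; rewrite has_find size_iota in lt.
split => //.
have := nth_find 0 hh; rewrite nth_iota //.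
Qed.

Lemma dist_reach x y : reach e (dist e x y) x y.
Proof. by case: (dist_spec x y). Qed.

Lemma dist_min x y k : reach e k x y -> (dist e x y <= k)%N.
Proof.
move=> hk; case: (ltnP k n) => kn; last first.
  by case: (dist_spec x y) => _ h; apply: ltnW; apply: leq_trans h kn.
rewrite leqNgt; apply/negP => lt.
have := before_find 0 lt; rewrite nth_iota //= ?hk //.
Qed.

Lemma dist_le x y k : (dist e x y <= k)%N = reach e k x y.
Proof.
apply/idP/idP; last exact: dist_min.
by move=> h; apply: reach_le h (dist_reach x y).
Qed.

Lemma dist_sym x y : dist e x y = dist e y x.
Proof.
by apply/eqP; rewrite eqn_leq !dist_le; apply/andP; split; apply: reach_sym;
  apply: dist_reach.
Qed.

Lemma dist_tri x y z : (dist e x z <= dist e x y + dist e y z)%N.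
Proof. by rewrite dist_le; apply: reach_trans; apply: dist_reach. Qed.

Lemma dist0 x y : (dist e x y == 0)%N = (x == y).
Proof. by rewrite -leqn0 dist_le. Qed.

Lemma distxx x : dist e x x = 0%N.
Proof. by apply/eqP; rewrite dist0. Qed.

Lemma dist_edge x y : e x y -> dist e x y = 1%N.
Proof.
move=> h; apply/eqP; rewrite eqn_leq dist_le reach_edge //= lt0n dist0.
by apply/eqP => exy; move: h; rewrite exy eirr.
Qed.

Lemma dist_step x y k : dist e x y = k.+1 ->
  exists2 z, e x z & dist e z y = k.
Proof.
move=> h; have := dist_reach x y; rewrite h /=.
case/orP => [hk|/existsP [z /andP [exz hz]]].
  by have := dist_min hk; rewrite h ltnn.
exists z => //; apply/eqP; rewrite eqn_leq dist_le hz /=.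
have := dist_tri x z y; rewrite h dist_edge //.
Qed.

Local Notation P := (path_set e).

Lemma inP r s y : (y \in P r s) = (dist e r y + dist e y s == dist e r s)%N.
Proof. by rewrite inE. Qed.

Lemma ps_l r s : r \in P r s.
Proof. by rewrite inP distxx. Qed.

Lemma ps_r r s : s \in P r s.
Proof. by rewrite inP distxx addn0. Qed.

Lemma ps_sym r s : P r s = P s r.
Proof. by apply/setP => y; rewrite !inP addnC (dist_sym r s) (dist_sym r y) (dist_sym y s). Qed.

Lemma ps_fwd r s y : y \in P r s -> y != s ->
  exists y', [/\ y' \in P r s, e y y' & dist e r y' = (dist e r y).+1].
Proof.
rewrite inP => /eqP hy ys.
case hd: (dist e y s) => [|k]; first by move/eqP: hd; rewrite dist0 (negbTE ys).
have [z eyz hz] := dist_step hd.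
have t1 := dist_tri r z s; have t2 := dist_tri r y z.
have t3 := dist_tri r y s.
rewrite (dist_edge eyz) in t2.
exists z; split => //; last by lia.
by rewrite inP; apply/eqP; lia.
Qed.

Lemma ps_bwd r s y : y \in P r s -> y != r ->
  exists y', [/\ y' \in P r s, e y y' & (dist e r y').+1 = dist e r y].
Proof.
rewrite (ps_sym r s) => hy yr; have [z [hz eyz dz]] := ps_fwd hy yr.
exists z; split => //.
move: hy hz; rewrite !inP => /eqP h1 /eqP h2.
rewrite (dist_sym s z) (dist_sym s y) in dz h1 h2.
rewrite (dist_sym z r) (dist_sym y r) in h1 h2.
rewrite (dist_sym s r) in h1 h2. lia.
Qed.

Lemma ps_dist_le r s y : y \in P r s -> (dist e r y <= dist e r s)%N.
Proof. by rewrite inP => /eqP <-; apply: leq_addr. Qed.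


Lemma nbrs1 y a : degree e y = 1%N -> e y a -> [set z | e y z] = [set a].
Proof.
move=> hd ha; apply/eqP; rewrite eq_sym eqEcard sub1set inE ha cards1 /=.
by move: hd; rewrite /degree => ->.
Qed.

Lemma nbrs2 y a b : degree e y = 2%N -> e y a -> e y b -> a != b ->
  [set z | e y z] = [set a; b].
Proof.
move=> hd ha hb ab; apply/eqP; rewrite eq_sym eqEcard subUset !sub1set !inE ha hb.
by rewrite cards2 ab /=; move: hd; rewrite /degree => ->.
Qed.

Lemma nbrs3 y a b c : degree e y = 3%N -> e y a -> e y b -> e y c ->
  a != b -> a != c -> b != c ->
  [set z | e y z] = [set a; b; c].
Proof.
move=> hd ha hb hc ab ac bc; apply/eqP; rewrite eq_sym eqEcard !subUset !sub1set !inE ha hb hc.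
rewrite -setUA cardsU1 cards2 bc !inE (negbTE ab) (negbTE ac) /=.
by move: hd; rewrite /degree => ->.
Qed.

Lemma degree_pos y : (1 < n)%N -> (0 < degree e y)%N.
Proof.
move=> n1; have [z zy] : exists z : 'I_n, z != y.
  case: (eqVneq y (Ordinal n1)) => [->|h]; last by exists (Ordinal n1); rewrite eq_sym.
  by exists (Ordinal (ltnW n1)); apply/eqP => /(congr1 val) /=.
case hd: (dist e y z) => [|k]; first by move/eqP: hd; rewrite dist0 eq_sym (negbTE zy).
have [w eyw _] := dist_step hd.
by apply/card_gt0P; exists w; rewrite inE.
Qed.

Section Vals.
Local Open Scope ring_scope.
Variables (F : fieldType) (x : 'I_n -> F).
Hypothesis EQ : forall y, (degree e y)%:R * x y - \sum_(z in [set z | e y z]) x z = x y.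

Lemma EQ1 y a : degree e y = 1%N -> e y a -> x a = 0.
Proof.
move=> hd ha; have := EQ y; rewrite hd (nbrs1 hd ha) big_set1 mul1r.
by move/eqP; rewrite -subr_eq0 addrAC subrr add0r oppr_eq0 => /eqP.
Qed.

Lemma EQ2 y a b : degree e y = 2%N -> e y a -> e y b -> a != b ->
  x a = x y - x b.
Proof.
move=> hd ha hb ab; have := EQ y; rewrite hd (nbrs2 hd ha hb ab).
rewrite big_setU1 ?inE //= big_set1 => h.
apply/eqP; rewrite -subr_eq0; apply/eqP.
transitivity (x y - (2%:R * x y - (x a + x b))); first by ring.
by rewrite h subrr.
Qed.

Lemma EQ3 y a b c : degree e y = 3%N -> e y a -> e y b -> e y c ->
  a != b -> a != c -> b != c ->
  x a + x b + x c = 2%:R * x y.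
Proof.
move=> hd ha hb hc ab ac bc; have := EQ y; rewrite hd (nbrs3 hd ha hb hc ab ac bc).
rewrite -setUA big_setU1 ?inE ?(negbTE ab) ?(negbTE ac) //= big_setU1 ?inE //= big_set1 => h.
apply/eqP; rewrite -subr_eq0; apply/eqP.
transitivity (x y - (3%:R * x y - (x a + (x b + x c)))); first by ring.
by rewrite h subrr.
Qed.

Local Notation P := (path_set e).

Lemma prop_step r s (int2 : forall y, y \in P r s -> y != r -> y != s -> degree e y = 2%N)
  j y : y \in P r s -> dist e r y = j.+2 ->
  exists z w, [/\ z \in P r s, w \in P r s, dist e r z = j.+1, dist e r w = j
     & x y = x z - x w].
Proof.
move=> hy dy.
have yr : y != r by apply/negP => /eqP yr; move: dy; rewrite yr distxx.
have [z [hz eyz dz]] := ps_bwd hy yr.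
have zr : z != r by apply/negP => /eqP zr; move: dz; rewrite zr distxx dy.
have [w [hw ezw dw]] := ps_bwd hz zr.
have zs : z != s.
  apply/negP => /eqP zs; have := ps_dist_le hy; rewrite -zs; lia.
have d2 := int2 z hz zr zs.
exists z, w; split; [exact: hz | exact: hw | lia | lia |].
apply: (EQ2 d2); [by rewrite esymm | exact: ezw |].
by apply/negP => /eqP yw; move: dw dz dy; rewrite yw; lia.
Qed.

Lemma arm u m : degree e u = 1%N ->
  (forall y, y \in P u m -> y != u -> y != m -> degree e y = 2%N) ->
  forall y, y \in P u m -> x y = x u * s6 F (dist e u y).
Proof.
move=> du int2.
suff H : forall j, (forall y, y \in P u m -> dist e u y = j -> x y = x u * s6 F j) /\
   (forall y, y \in P u m -> dist e u y = j.+1 -> x y = x u * s6 F j.+1).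
  by move=> y hy; case: (H (dist e u y)) => h _; apply: h.
elim=> [|j [IH1 IH2]].
  split.
    move=> y _ /eqP; rewrite dist0 => /eqP ->.
    by rewrite s6_0 mulr1.
  move=> y hy dy.
  have yu : y != u by apply/negP => /eqP yu; move: dy; rewrite yu distxx.
  have [z [hz eyz dz]] := ps_bwd hy yu.
  have zu : z = u by apply/eqP; rewrite -dist0 dist_sym; apply/eqP; move: dz; rewrite dy; case.
  rewrite s6_1 mulr0; apply: (EQ1 du).
  by rewrite esymm -zu.
split; first exact: IH2.
move=> y hy dy.
have [z [w [hz hw dz dw ->]]] := prop_step int2 hy dy.
by rewrite (IH2 z hz dz) (IH1 w hw dw) s6_rec mulrBr.
Qed.

Lemma mid a b :
  (forall y, y \in P a b -> y != a -> y != b -> degree e y = 2%N) ->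
  (forall y, y \in P a b -> (dist e a y <= 1)%N -> x y = 0) ->
  forall y, y \in P a b -> x y = 0.
Proof.
move=> int2 h01.
suff H : forall j, (forall y, y \in P a b -> dist e a y = j -> x y = 0) /\
   (forall y, y \in P a b -> dist e a y = j.+1 -> x y = 0).
  by move=> y hy; case: (H (dist e a y)) => h _; apply: h.
elim=> [|j [IH1 IH2]].
  by split => y hy dy; apply: (h01 y hy); rewrite dy.
split; first exact: IH2.
move=> y hy dy.
have [z [w [hz hw dz dw ->]]] := prop_step int2 hy dy.
by rewrite (IH2 z hz dz) (IH1 w hw dw) subrr.
Qed.

End Vals.

End Tree.

Lemma meet1 (T : finType) (A B : {set T}) c y :
  A :&: B = [set c] -> y \in A -> y \in B -> y = c.
Proof. move=> h ya yb; have : y \in A :&: B by rewrite inE ya yb.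
by rewrite h inE => /eqP. Qed.

Lemma meet0 (T : finType) (A B : {set T}) y :
  A :&: B = set0 -> y \in A -> y \in B -> False.
Proof. move=> h ya yb; have : y \in A :&: B by rewrite inE ya yb.
by rewrite h inE. Qed.

Lemma sum_degree n (e : rel 'I_n) :
  #|[set p : 'I_n * 'I_n | e p.1 p.2]| = (\sum_y degree e y)%N.
Proof.
symmetry; rewrite /degree.
under eq_bigr do rewrite -sum1_card big_mkcond /=.
rewrite pair_bigA /= -sum1_card big_mkcond /=.
rewrite [RHS]big_mkcond; by apply: eq_bigr => p _; rewrite !inE.
Qed.

Section Main.
Variables (n : nat) (e : rel 'I_n) (u1 u2 u3 u4 m1 m2 : 'I_n).
Local Notation P := (path_set e).
Hypothesis Htree : is_tree e.
Hypothesis Hu : uniq [:: u1; u2; u3; u4].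
Hypothesis Hp : forall x, pendant e x = (x \in [:: u1; u2; u3; u4]).
Hypothesis Hm12 : m1 != m2.
Hypothesis Hm : forall x, major e x = (x \in [:: m1; m2]).

Lemma esymm : symmetric e. Proof. by case: Htree => [[]]. Qed.
Lemma eirr : irreflexive e. Proof. by case: Htree => [[]]. Qed.
Lemma econn : forall x y, connect e x y. Proof. by case: Htree. Qed.
Lemma ecard : #|[set p : 'I_n * 'I_n | e p.1 p.2]| = (2 * n.-1)%N.
Proof. by case: Htree. Qed.

Lemma degu x : x \in [:: u1; u2; u3; u4] -> degree e x = 1%N.
Proof. by rewrite -Hp => /eqP. Qed.
Lemma degm x : x \in [:: m1; m2] -> (3 <= degree e x)%N.
Proof. by rewrite -Hm. Qed.

Lemma du1 : degree e u1 = 1%N. Proof. by apply: degu; rewrite !inE eqxx. Qed.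
Lemma du2 : degree e u2 = 1%N. Proof. by apply: degu; rewrite !inE eqxx ?orbT. Qed.
Lemma du3 : degree e u3 = 1%N. Proof. by apply: degu; rewrite !inE eqxx ?orbT. Qed.
Lemma du4 : degree e u4 = 1%N. Proof. by apply: degu; rewrite !inE eqxx ?orbT. Qed.
Lemma dm1 : (3 <= degree e m1)%N. Proof. by apply: degm; rewrite !inE eqxx. Qed.
Lemma dm2 : (3 <= degree e m2)%N. Proof. by apply: degm; rewrite !inE eqxx ?orbT. Qed.

Lemma n_gt1 : (1 < n)%N.
Proof.
have : u1 != u2 by move: Hu; rewrite /= !inE; case: (u1 == u2).
move=> h; have h1 := ltn_ord u1; have h2 := ltn_ord u2.
have h3 : nat_of_ord u1 != nat_of_ord u2 by [].
lia.
Qed.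

Lemma deg2_of y : y \notin [:: u1; u2; u3; u4] -> y \notin [:: m1; m2] ->
  degree e y = 2%N.
Proof.
rewrite -Hp -Hm /pendant /major => h1 h2.
have := degree_pos eirr econn y n_gt1.
move: h1 h2; case: (degree e y) => [|[|[|k]]] //.
Qed.

Lemma um x y : x \in [:: u1; u2; u3; u4] -> y \in [:: m1; m2] -> x != y.
Proof.
move=> hx hy; apply/negP => /eqP E; have := degm hy; rewrite -E degu //.
Qed.

Lemma deg_m1 : degree e m1 = 3%N /\ degree e m2 = 3%N.
Proof.
have hs := sum_degree e; rewrite ecard in hs.
pose us := [:: u1; u2; u3; u4].
have pw : forall y, (degree e y + (y \in us))%N =
   (2 + (y == m1) * (degree e m1 - 2) + (y == m2) * (degree e m2 - 2))%N.
  move=> y; case: (boolP (y \in us)) => yu.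
    rewrite degu //.
    have /negbTE -> : y != m1 by apply: um; rewrite // !inE eqxx.
    have /negbTE -> : y != m2 by apply: um; rewrite // !inE eqxx ?orbT.
    by [].
  case: (eqVneq y m1) => [->|ym1].
    rewrite ?eqxx (negbTE Hm12) /=.
    have := dm1; lia.
  case: (eqVneq y m2) => [->|ym2].
    rewrite ?eqxx /=.
    have := dm2; lia.
  rewrite /= deg2_of //.
  by rewrite !inE negb_or ym1 ym2.
have S : (\sum_y (degree e y + (y \in us)))%N =
   (\sum_(y < n) (2 + (y == m1) * (degree e m1 - 2) + (y == m2) * (degree e m2 - 2)))%N.
  by apply: eq_bigr => y _; exact: pw.
rewrite !big_split /= -hs in S.
have c1 : (\sum_(y < n) (y \in us))%N = 4%N.
  rewrite -big_mkcondr /= sum1_card.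
  by move/card_uniqP: Hu.
have c2 : (\sum_(y < n) 2)%N = (2 * n)%N by rewrite sum_nat_const card_ord mulnC.
have c3 : forall (m : 'I_n) c, (\sum_(y < n) (y == m) * c)%N = c.
  move=> m c; rewrite (bigD1 m) //= eqxx mul1n big1 ?addn0 // => i /negbTE ->.
  by rewrite mul0n.
rewrite c1 c2 !c3 in S.
have := dm1; have := dm2; have := n_gt1; lia.
Qed.

Hypothesis Hcov : P u1 m1 :|: P u2 m1 :|: P m1 m2 :|: P u3 m2 :|: P u4 m2 = [set: 'I_n].
Hypothesis I12 : P u1 m1 :&: P u2 m1 = [set m1].
Hypothesis I1M : P u1 m1 :&: P m1 m2 = [set m1].
Hypothesis I2M : P u2 m1 :&: P m1 m2 = [set m1].
Hypothesis I34 : P u3 m2 :&: P u4 m2 = [set m2].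
Hypothesis I3M : P u3 m2 :&: P m1 m2 = [set m2].
Hypothesis I4M : P u4 m2 :&: P m1 m2 = [set m2].
Hypothesis I13 : P u1 m1 :&: P u3 m2 = set0.
Hypothesis I14 : P u1 m1 :&: P u4 m2 = set0.
Hypothesis I23 : P u2 m1 :&: P u3 m2 = set0.
Hypothesis I24 : P u2 m1 :&: P u4 m2 = set0.

Lemma deg2_6 y : y != u1 -> y != u2 -> y != u3 -> y != u4 -> y != m1 -> y != m2 ->
  degree e y = 2%N.
Proof.
move=> h1 h2 h3 h4 h5 h6; apply: deg2_of; rewrite !inE !negb_or.
  by rewrite h1 h2 h3 h4.
by rewrite h5 h6.
Qed.

Let psl := ps_l econn.
Let psr := ps_r econn.

Lemma um11 : u1 != m1. Proof. by apply: um; rewrite !inE eqxx ?orbT. Qed.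
Lemma um21 : u2 != m1. Proof. by apply: um; rewrite !inE eqxx ?orbT. Qed.
Lemma um32 : u3 != m2. Proof. by apply: um; rewrite !inE eqxx ?orbT. Qed.
Lemma um42 : u4 != m2. Proof. by apply: um; rewrite !inE eqxx ?orbT. Qed.
Lemma um12 : u1 != m2. Proof. by apply: um; rewrite !inE eqxx ?orbT. Qed.
Lemma um22 : u2 != m2. Proof. by apply: um; rewrite !inE eqxx ?orbT. Qed.
Lemma um31 : u3 != m1. Proof. by apply: um; rewrite !inE eqxx ?orbT. Qed.
Lemma um41 : u4 != m1. Proof. by apply: um; rewrite !inE eqxx ?orbT. Qed.

Lemma int_1 y : y \in P u1 m1 -> y != u1 -> y != m1 -> degree e y = 2%N.
Proof.
move=> hy h1 hm; apply: deg2_6 => //.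
- by apply/eqP => E; move/eqP: hm; apply; apply: (meet1 I12 hy); rewrite E psl.
- by apply/eqP => E; apply: (meet0 I13 hy); rewrite E psl.
- by apply/eqP => E; apply: (meet0 I14 hy); rewrite E psl.
- by apply/eqP => E; move/eqP: hm; apply; apply: (meet1 I1M hy); rewrite E psr.
Qed.

Lemma int_2 y : y \in P u2 m1 -> y != u2 -> y != m1 -> degree e y = 2%N.
Proof.
move=> hy h1 hm; apply: deg2_6 => //.
- by apply/eqP => E; move/eqP: hm; apply; apply: (meet1 I12 _ hy); rewrite E psl.
- by apply/eqP => E; apply: (meet0 I23 hy); rewrite E psl.
- by apply/eqP => E; apply: (meet0 I24 hy); rewrite E psl.
- by apply/eqP => E; move/eqP: hm; apply; apply: (meet1 I2M hy); rewrite E psr.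
Qed.

Lemma int_3 y : y \in P u3 m2 -> y != u3 -> y != m2 -> degree e y = 2%N.
Proof.
move=> hy h1 hm; apply: deg2_6 => //.
- by apply/eqP => E; apply: (meet0 I13 _ hy); rewrite E psl.
- by apply/eqP => E; apply: (meet0 I23 _ hy); rewrite E psl.
- by apply/eqP => E; move/eqP: hm; apply; apply: (meet1 I34 hy); rewrite E psl.
- by apply/eqP => E; move/eqP: hm; apply; apply: (meet1 I3M hy); rewrite E psl.
Qed.

Lemma int_4 y : y \in P u4 m2 -> y != u4 -> y != m2 -> degree e y = 2%N.
Proof.
move=> hy h1 hm; apply: deg2_6 => //.
- by apply/eqP => E; apply: (meet0 I14 _ hy); rewrite E psl.
- by apply/eqP => E; apply: (meet0 I24 _ hy); rewrite E psl.
- by apply/eqP => E; move/eqP: hm; apply; apply: (meet1 I34 _ hy); rewrite E psl.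
- by apply/eqP => E; move/eqP: hm; apply; apply: (meet1 I4M hy); rewrite E psl.
Qed.

Lemma int_M y : y \in P m1 m2 -> y != m1 -> y != m2 -> degree e y = 2%N.
Proof.
move=> hy h1 h2; apply: deg2_6 => //.
- by apply/eqP => E; move/eqP: h1; apply; apply: (meet1 I1M _ hy); rewrite E psl.
- by apply/eqP => E; move/eqP: h1; apply; apply: (meet1 I2M _ hy); rewrite E psl.
- by apply/eqP => E; move/eqP: h2; apply; apply: (meet1 I3M _ hy); rewrite E psl.
- by apply/eqP => E; move/eqP: h2; apply; apply: (meet1 I4M _ hy); rewrite E psl.
Qed.


Section Vals2.
Local Open Scope ring_scope.
Variables (F : fieldType) (x : 'I_n -> F).
Hypothesis EQ : forall y, (degree e y)%:R * x y - \sum_(z in [set z | e y z]) x z = x y.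

Lemma zero_of t (c : F) : c != 0 -> t * c = 0 -> t = 0.
Proof. by move=> cn /eqP; rewrite mulf_eq0 (negbTE cn) orbF => /eqP. Qed.

Lemma zero2 t j : t * s6 F j.+1 = 0 -> t * s6 F j = 0 -> t = 0.
Proof.
move=> h1 h2; case: (eqVneq (s6 F j.+1) 0) => h.
  by apply: zero_of h2; apply: s6_pair.
by apply: zero_of h h1.
Qed.

Lemma s6_nz k : (k %% 3 != 1)%N -> s6 F k != 0.
Proof. by rewrite s6_eq0. Qed.

Lemma comb_main :
  ~~ ((dist e u1 m1 %% 3 == 1) && (dist e u2 m1 %% 3 == 1))%N ->
  ~~ ((dist e u3 m2 %% 3 == 1) && (dist e u4 m2 %% 3 == 1))%N ->
  x (if (dist e u2 m1 %% 3 != 1)%N then u1 else u2) = 0 ->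
  forall y, x y = 0.
Proof.
move=> hA hB hv.
have A1 := arm esymm eirr econn EQ du1 int_1.
have A2 := arm esymm eirr econn EQ du2 int_2.
have A3 := arm esymm eirr econn EQ du3 int_3.
have A4 := arm esymm eirr econn EQ du4 int_4.
have xm11 := A1 m1 (psr u1 m1).
have xm12 := A2 m1 (psr u2 m1).
have [t1 t2] : x u1 = 0 /\ x u2 = 0.
  case: (boolP (dist e u2 m1 %% 3 != 1)%N) => hk2 in hv *.
    split => //; apply: (zero_of (s6_nz hk2)).
    by rewrite -xm12 xm11 hv mul0r.
  have hk1 : (dist e u1 m1 %% 3 != 1)%N.
    by move: hk2; rewrite negbK => hk2; rewrite hk2 andbT in hA.
  split => //; apply: (zero_of (s6_nz hk1)).
  by rewrite -xm11 xm12 hv mul0r.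
have xm1 : x m1 = 0 by rewrite xm11 t1 mul0r.
have m1u1 : m1 != u1 by rewrite eq_sym um11.
have m1u2 : m1 != u2 by rewrite eq_sym um21.
have [a1 [ha1 ea1 _]] := ps_bwd esymm eirr econn (psr u1 m1) m1u1.
have [a2 [ha2 ea2 _]] := ps_bwd esymm eirr econn (psr u2 m1) m1u2.
have xa1 : x a1 = 0 by rewrite (A1 a1 ha1) t1 mul0r.
have xa2 : x a2 = 0 by rewrite (A2 a2 ha2) t2 mul0r.
have [b [hb eb _]] := ps_fwd eirr econn (psl m1 m2) Hm12.
have a1m : a1 != m1 by apply/eqP => E; move: ea1; rewrite E eirr.
have a2m : a2 != m1 by apply/eqP => E; move: ea2; rewrite E eirr.
have a12 : a1 != a2.
  by apply/eqP => E; move/eqP: a1m; apply; apply: (meet1 I12 ha1); rewrite E.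
have a1b : a1 != b.
  by apply/eqP => E; move/eqP: a1m; apply; apply: (meet1 I1M ha1); rewrite E.
have a2b : a2 != b.
  by apply/eqP => E; move/eqP: a2m; apply; apply: (meet1 I2M ha2); rewrite E.
have [d1 d2] := deg_m1.
have e3 := EQ3 EQ d1 ea1 ea2 eb a12 a1b a2b.
have xb : x b = 0.
  by move: e3; rewrite xa1 xa2 xm1 mulr0 !add0r.
have nbr0 : forall y, e m1 y -> x y = 0.
  move=> y ey; have : y \in [set z | e m1 z] by rewrite inE.
  rewrite (nbrs3 d1 ea1 ea2 eb a12 a1b a2b) !inE.
  by case/orP => [/orP [] | ] /eqP ->.
have h01 : forall y, y \in P m1 m2 -> (dist e m1 y <= 1)%N -> x y = 0.
  move=> y hy; case: (eqVneq y m1) => [-> _ | ym1 dy]; first exact: xm1.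
  have [z [hz eyz dz]] := ps_bwd esymm eirr econn hy ym1.
  have dz0 : dist e m1 z = 0%N by apply/eqP; rewrite -leqn0 -ltnS dz.
  have zm : z = m1 by apply/eqP; rewrite eq_sym -(dist0 econn) dz0.
  by apply: nbr0; rewrite esymm -zm.
have Mid := mid esymm eirr econn EQ int_M h01.
have xm2 : x m2 = 0 := Mid m2 (psr m1 m2).
have m2m1 : m2 != m1 by rewrite eq_sym.
have m2u3 : m2 != u3 by rewrite eq_sym um32.
have m2u4 : m2 != u4 by rewrite eq_sym um42.
have [b' [hb' eb' _]] := ps_bwd esymm eirr econn (psr m1 m2) m2m1.
have xb' : x b' = 0 := Mid b' hb'.
have [a3 [ha3 ea3 da3]] := ps_bwd esymm eirr econn (psr u3 m2) m2u3.
have [a4 [ha4 ea4 da4]] := ps_bwd esymm eirr econn (psr u4 m2) m2u4.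
have a3m : a3 != m2 by apply/eqP => E; move: ea3; rewrite E eirr.
have a4m : a4 != m2 by apply/eqP => E; move: ea4; rewrite E eirr.
have a34 : a3 != a4.
  by apply/eqP => E; move/eqP: a3m; apply; apply: (meet1 I34 ha3); rewrite E.
have a3b : a3 != b'.
  by apply/eqP => E; move/eqP: a3m; apply; apply: (meet1 I3M ha3); rewrite E.
have a4b : a4 != b'.
  by apply/eqP => E; move/eqP: a4m; apply; apply: (meet1 I4M ha4); rewrite E.
have e3' := EQ3 EQ d2 ea3 ea4 eb' a34 a3b a4b.
rewrite xb' xm2 mulr0 addr0 (A3 a3 ha3) (A4 a4 ha4) in e3'.
have h3 : x u3 * s6 F (dist e u3 m2) = 0 by rewrite -(A3 m2 (psr u3 m2)).
have h4 : x u4 * s6 F (dist e u4 m2) = 0 by rewrite -(A4 m2 (psr u4 m2)).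
have [t3 t4] : x u3 = 0 /\ x u4 = 0.
  case: (boolP (dist e u3 m2 %% 3 != 1)%N) => hk3.
    have t3 := zero_of (s6_nz hk3) h3.
    split => //.
    rewrite t3 mul0r add0r in e3'.
    by rewrite -da4 in h4; apply: zero2 h4 e3'.
  have hk4 : (dist e u4 m2 %% 3 != 1)%N.
    by move: hk3; rewrite negbK => hk3; rewrite hk3 /= in hB.
  have t4 := zero_of (s6_nz hk4) h4.
  split => //.
  rewrite t4 mul0r addr0 in e3'.
  by rewrite -da3 in h3; apply: zero2 h3 e3'.
move=> y; have : y \in [set: 'I_n] by rewrite inE.
rewrite -Hcov !in_setU => /orP [/orP [/orP [/orP [h|h]|h]|h]|h].
- by rewrite (A1 y h) t1 mul0r.
- by rewrite (A2 y h) t2 mul0r.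
- exact: Mid y h.
- by rewrite (A3 y h) t3 mul0r.
- by rewrite (A4 y h) t4 mul0r.
Qed.

End Vals2.
End Main.

Section LapSec.
Local Open Scope ring_scope.

Lemma lap_sym n (e : rel 'I_n) : symmetric e -> (laplacian e)^T = laplacian e.
Proof.
move=> es; apply/matrixP => i j; rewrite /laplacian !mxE eq_sym.
by case: (eqVneq j i) => [->|_] //; rewrite es.
Qed.

Lemma eig_EQ n (e : rel 'I_n) (es : symmetric e) (ei : irreflexive e)
  (x : 'rV[algC]_n) : x *m map_mx ratr (laplacian e) = x ->
  forall y, (degree e y)%:R * x 0 y - \sum_(z in [set z | e y z]) x 0 z = x 0 y.
Proof.
move=> h y.
transitivity ((x *m map_mx ratr (laplacian e)) 0 y); last by rewrite h.
rewrite /laplacian mxE [RHS](bigD1 y) //= !mxE eqxx ratr_nat mulrC; congr (_ + _).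
rewrite -sumrN big_mkcond [RHS]big_mkcond /=; apply: eq_bigr => j _.
rewrite !mxE inE; case: (eqVneq j y) => [->|jy] /=; first by rewrite ei.
rewrite es; case: (e j y); first by rewrite rmorphN1 mulrN1.
by rewrite rmorph0 mulr0.
Qed.

End LapSec.

Section AlgSec.
Local Open Scope ring_scope.
Local Open Scope sesquilinear_scope.

Lemma char_poly_similar (F : fieldType) n (P D : 'M[F]_n) : P \in unitmx ->
  char_poly (invmx P *m D *m P) = char_poly D.
Proof.
move=> Pu.
have E : char_poly_mx (invmx P *m D *m P) =
   map_mx polyC (invmx P) *m char_poly_mx D *m map_mx polyC P.
  rewrite /char_poly_mx mulmxBr mulmxBl -!map_mxM.
  rewrite mul_mx_scalar -scalemxAl -map_mxM mulVmx // map_mx1.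
  by rewrite scalemx1.
rewrite /char_poly E !det_mulmx mulrC mulrA -det_mulmx -map_mxM mulmxV //.
by rewrite map_mx1 det1 mul1r.
Qed.

Lemma two_eigen_idx n (d : 'rV[algC]_n) :
  (2 <= mup 1 (\prod_(i < n) ('X - (d 0 i)%:P)))%N ->
  exists i j : 'I_n, [/\ i != j, d 0 i = 1 & d 0 j = 1].
Proof.
rewrite -(big_map (fun i => d 0 i) xpredT (fun y => 'X - y%:P)) mu_prod_XsubC.
rewrite count_map.
set S := [set i : 'I_n | d 0 i == 1].
have -> : count (preim (fun i => d 0 i) (pred1 1)) (index_enum 'I_n) = #|S|.
  by rewrite cardE /enum_mem size_filter /= [index_enum _]unlock; apply: eq_count => i /=; rewrite inE.
move=> cS.
have /card_gt0P [i iS] : (0 < #|S|)%N by apply: leq_trans cS.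
have : (0 < #|S :\ i|)%N by rewrite (cardsD1 i S) iS in cS.
case/card_gt0P => j; rewrite !inE => /andP [ji /eqP dj].
by exists i, j; split => //; [rewrite eq_sym | move: iS; rewrite inE => /eqP].
Qed.

Lemma alg_part n (L : 'M[rat]_n) : L^T = L -> (2 <= mup 1 (char_poly L))%N ->
  forall v : 'I_n, exists x : 'rV[algC]_n,
    [/\ x != 0, x *m map_mx ratr L = x & x 0 v = 0].
Proof.
move=> Lsym hm v.
set A := map_mx ratr L.
have Anorm : A \is normalmx.
  apply/normalmxP; suff -> : A ^t* = A by [].
    apply/matrixP => i j; rewrite !mxE.
    have -> : L j i = L i j by rewrite -{1}Lsym mxE.
    by apply: conj_Creal; apply: rpred_rat.
have := orthomx_spectralP Anorm.
set P := spectralmx A; set d := spectral_diag A => AE.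
have Pu : P \in unitmx by apply: spectral_unit.
have cpnz : char_poly L != 0 by rewrite monic_neq0 // char_poly_monic.
have hm2 : (2 <= mup 1 (char_poly A))%N.
  rewrite -map_char_poly mup_geq; last by rewrite map_poly_eq0.
  rewrite -(rmorph1 (ratr : {rmorphism rat -> algC})) -map_polyXsubC -rmorphXn dvdp_map.
  by rewrite -mup_geq.
move: hm2; rewrite AE char_poly_similar // char_poly_trig ?diag_mx_is_trig //.
under eq_bigr do rewrite mxE eqxx mulr1n.
case/two_eigen_idx => i [j [ij di dj]].
have PA : P *m A = diag_mx d *m P by rewrite {1}AE !mulmxA mulmxV // mul1mx.
have rowA k : d 0 k = 1 -> row k P *m A = row k P.
  by move=> dk; rewrite rowE -mulmxA PA mulmxA -rowE row_diag_mx dk scale1r.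
pose a := if P i v == 0 then 1 else P j v.
pose b := if P i v == 0 then 0 else - P i v.
exists (a *: row i P + b *: row j P); split.
- apply/negP => /eqP h.
  have h2 : (a *: ('e_i : 'rV[algC]_n) + b *: 'e_j) *m P = 0 by rewrite mulmxDl -!scalemxAl -!rowE.
  have h3 : a *: ('e_i : 'rV[algC]_n) + b *: 'e_j = 0.
    by rewrite -[LHS]mulmx1 -(mulmxV Pu) mulmxA h2 mul0mx.
  have /matrixP /(_ 0 i) := h3; have /matrixP /(_ 0 j) := h3.
  rewrite !mxE !eqxx (negbTE ij) eq_sym (negbTE ij) /a /b.
  rewrite /= ?mulr1 ?mulr0 ?add0r ?addr0. 
  case: eqP => [_|/eqP Pi]; first by move=> _ /eqP; rewrite oner_eq0.
  by move/eqP; rewrite oppr_eq0 (negbTE Pi).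
- by rewrite -AE mulmxDl -!scalemxAl rowA // rowA.
- rewrite !mxE /a /b; case: eqP => [->|_]; first by rewrite mulr0 mul0r addr0.
  by rewrite mulNr mulrC subrr.
Qed.

End AlgSec.

Theorem mainTheorem13 (n : nat) (e : rel 'I_n)
    (u1 u2 u3 u4 m1 m2 : 'I_n) :
  is_tree e ->
  uniq [:: u1; u2; u3; u4] ->
  (forall x, pendant e x = (x \in [:: u1; u2; u3; u4])) ->
  m1 != m2 ->
  (forall x, major e x = (x \in [:: m1; m2])) ->
  (* T is the union of the five paths *)
  path_set e u1 m1 :|: path_set e u2 m1 :|: path_set e m1 m2
    :|: path_set e u3 m2 :|: path_set e u4 m2 = [set: 'I_n] ->
  (* gluing at m1 and m2; the five paths otherwise disjoint *)
  path_set e u1 m1 :&: path_set e u2 m1 = [set m1] ->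
  path_set e u1 m1 :&: path_set e m1 m2 = [set m1] ->
  path_set e u2 m1 :&: path_set e m1 m2 = [set m1] ->
  path_set e u3 m2 :&: path_set e u4 m2 = [set m2] ->
  path_set e u3 m2 :&: path_set e m1 m2 = [set m2] ->
  path_set e u4 m2 :&: path_set e m1 m2 = [set m2] ->
  path_set e u1 m1 :&: path_set e u3 m2 = set0 ->
  path_set e u1 m1 :&: path_set e u4 m2 = set0 ->
  path_set e u2 m1 :&: path_set e u3 m2 = set0 ->
  path_set e u2 m1 :&: path_set e u4 m2 = set0 ->
  (2 <= eig_mult e 1)%N ->
  ((dist e u1 m1 %% 3 == 1) && (dist e u2 m1 %% 3 == 1))%N \/
  ((dist e u3 m2 %% 3 == 1) && (dist e u4 m2 %% 3 == 1))%N.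
Proof.
move=> Ht Hu Hp Hm12 Hm Hcov I12 I1M I2M I34 I3M I4M I13 I14 I23 I24 hmult.
case: (boolP ((dist e u1 m1 %% 3 == 1) && (dist e u2 m1 %% 3 == 1))%N) => hA; first by left.
case: (boolP ((dist e u3 m2 %% 3 == 1) && (dist e u4 m2 %% 3 == 1))%N) => hB; first by right.
exfalso.
have es : symmetric e by case: Ht => [[]].
have ei : irreflexive e by case: Ht => [[]].
have [x [xn0 xA xv]] := alg_part (lap_sym es) hmult
  (if (dist e u2 m1 %% 3 != 1)%N then u1 else u2).
have EQ := eig_EQ es ei xA.
have h := comb_main Ht Hu Hp Hm12 Hm Hcov I12 I1M I2M I34 I3M I4M I13 I14 I23 I24 EQ hA hB xv.
move/negP: xn0; apply; apply/eqP/rowP => i.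
by rewrite h mxE.
Qed.
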